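(* Let $m>1$, $N\ge2$, $\chi>C_N$, and let $X_0\in\mathcal R^N$ satisfy $\mathcal F^N_m(X_0)<0$. Then the maximal solution $X$ in $\mathcal R^N$ of the gradient flow system with $X(0)=X_0$ blows up in finite time; in particular its maximal time of existence is finite.
   Context: $\mathcal R^N=\{X\in\mathbb R^N: X_1<\dots<X_N,\ \sum_iX_i=0\}$. $\mathcal F^N_m(X)=\frac1{m-1}\sum_{i=1}^{N-1}(X_{i+1}-X_i)^{1-m}-\frac{\chi}{m-1}\sum_{1\le i\ne j\le N}|X_i-X_j|^{1-m}$. $C_N$ is defined by $\frac1{C_N}=\max_{X\in\mathcal R^N}\frac{\sum_{1\le i\ne j\le N}|X_j-X_i|^{1-m}}{\sum_{i=1}^{N-1}(X_{i+1}-X_i)^{1-m}}$. Gradient flow system: for $i=1,\dots,N$, $\dot X_i=-(X_{i+1}-X_i)^{-m}+(X_i-X_{i-1})^{-m}+2\chi\sum_{j\ne i}\mathrm{sign}(j-i)|X_j-X_i|^{-m}$, the first term absent for $i=N$ and the second for $i=1$ (i.e. $\dot X=-\nabla\mathcal F^N_m(X)$). Blow-up in finite time: the maximal existence time $T$ is finite and there exist $i_0$ and $t_n\to T$ with $X_{i_0+1}(t_n)-X_{i_0}(t_n)\to0$. *)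

(* Defs.v *)
From Stdlib Require Import Reals Lra List.
From Coquelicot Require Import Coquelicot.
Open Scope R_scope.

(* Points of R^N are represented by x : nat -> R, using only the
   coordinates x 0, ..., x (N-1) (paper's X_1,...,X_N shifted by one). *)

Definition rsum (n : nat) (f : nat -> R) : R :=
  fold_right Rplus 0 (map f (seq 0 n)).

Definition rsum_neq (n : nat) (f : nat -> nat -> R) : R :=
  rsum n (fun i => rsum n (fun j => if Nat.eqb i j then 0 else f i j)).

Definition inRN (N : nat) (x : nat -> R) : Prop :=
  (forall i : nat, (i + 1 < N)%nat -> x i < x (i + 1)%nat) /\ rsum N x = 0.

Definition gap_sum (N : nat) (m : R) (x : nat -> R) : R :=
  rsum (N - 1) (fun i => Rpower (x (i + 1)%nat - x i) (1 - m)).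

Definition pair_sum (N : nat) (m : R) (x : nat -> R) : R :=
  rsum_neq N (fun i j => Rpower (Rabs (x i - x j)) (1 - m)).

Definition FNm (N : nat) (m chi : R) (x : nat -> R) : R :=
  / (m - 1) * gap_sum N m x - chi / (m - 1) * pair_sum N m x.

Definition is_CN (N : nat) (m c : R) : Prop :=
  c > 0 /\
  (exists x, inRN N x /\ pair_sum N m x / gap_sum N m x = / c) /\
  (forall x, inRN N x -> pair_sum N m x / gap_sum N m x <= / c).

Definition sgn_nat (i j : nat) : R :=
  if Nat.ltb i j then 1 else if Nat.ltb j i then -1 else 0.

Definition flow_rhs (N : nat) (m chi : R) (x : nat -> R) (i : nat) : R :=
  (if Nat.ltb (i + 1) N then - Rpower (x (i + 1)%nat - x i) (- m) else 0)
  + (match i with O => 0 | S k => Rpower (x i - x k) (- m) end)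
  + 2 * chi * rsum N (fun j => if Nat.eqb j i then 0
                               else sgn_nat i j * Rpower (Rabs (x j - x i)) (- m)).

Definition is_solution (N : nat) (m chi : R) (X0 : nat -> R)
    (T : Rbar) (X : R -> nat -> R) : Prop :=
  Rbar_lt 0 T /\
  (forall i, (i < N)%nat -> X 0 i = X0 i) /\
  (forall t, 0 <= t -> Rbar_lt t T -> inRN N (X t)) /\
  (forall i, (i < N)%nat ->
     filterlim (fun s => X s i) (at_right 0) (locally (X0 i))) /\
  (forall t i, 0 < t -> Rbar_lt t T -> (i < N)%nat ->
     is_derive (fun s => X s i) t (flow_rhs N m chi (X t) i)).

Definition is_maximal_solution (N : nat) (m chi : R) (X0 : nat -> R)
    (T : Rbar) (X : R -> nat -> R) : Prop :=
  is_solution N m chi X0 T X /\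
  ~ (exists (T' : Rbar) (Y : R -> nat -> R),
        Rbar_lt T T' /\ is_solution N m chi X0 T' Y /\
        (forall t i, 0 <= t -> Rbar_lt t T -> (i < N)%nat -> Y t i = X t i)).

Definition blows_up_finite_time (N : nat) (T : Rbar) (X : R -> nat -> R) : Prop :=
  exists T0 : R, T = Finite T0 /\
  exists (i0 : nat) (tn : nat -> R),
    (i0 + 1 < N)%nat /\
    (forall n, 0 <= tn n < T0) /\
    is_lim_seq tn T0 /\
    is_lim_seq (fun n => X (tn n) (i0 + 1)%nat - X (tn n) i0) 0.

(* Main.v *)
Require Import Defs.
From Stdlib Require Import Reals.
From Coquelicot Require Import Coquelicot.
From Stdlib Require Import Lra Lia List Classical ClassicalEpsilon ZArith.
Open Scope R_scope.

Lemma rsum_0 f : rsum 0 f = 0.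
Proof. reflexivity. Qed.

Lemma rsum_S n f : rsum (S n) f = rsum n f + f n.
Proof.
  unfold rsum. rewrite seq_S, map_app, fold_right_app. simpl.
  generalize (map f (seq 0 n)). intros l. induction l; simpl; lra.
Qed.

Lemma rsum_shift n f : rsum (S n) f = f 0%nat + rsum n (fun i => f (S i)).
Proof.
  unfold rsum. simpl. f_equal. rewrite <- seq_shift, map_map. reflexivity.
Qed.

Lemma rsum_ext n f g : (forall i, (i < n)%nat -> f i = g i) -> rsum n f = rsum n g.
Proof.
  induction n; intros H; [reflexivity|]. rewrite !rsum_S, IHn by (intros; apply H; lia).
  rewrite H by lia. reflexivity.
Qed.

Lemma rsum_plus n f g : rsum n (fun i => f i + g i) = rsum n f + rsum n g.
Proof. induction n; [simpl; unfold rsum; simpl; lra|]. rewrite !rsum_S, IHn. lra. Qed.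

Lemma rsum_scal n c f : rsum n (fun i => c * f i) = c * rsum n f.
Proof. induction n; [unfold rsum; simpl; lra|]. rewrite !rsum_S, IHn. lra. Qed.

Lemma rsum_opp n f : rsum n (fun i => - f i) = - rsum n f.
Proof. induction n; [unfold rsum; simpl; lra|]. rewrite !rsum_S, IHn. lra. Qed.

Lemma rsum_minus n f g : rsum n (fun i => f i - g i) = rsum n f - rsum n g.
Proof. induction n; [unfold rsum; simpl; lra|]. rewrite !rsum_S, IHn. lra. Qed.

Lemma rsum_const0 n : rsum n (fun _ => 0) = 0.
Proof. induction n; [reflexivity|]. rewrite rsum_S, IHn. lra. Qed.

Lemma rsum_swap n k f :
  rsum n (fun i => rsum k (fun j => f i j)) = rsum k (fun j => rsum n (fun i => f i j)).
Proof.
  induction n.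
  - rewrite rsum_0. rewrite <- (rsum_const0 k). symmetry. apply rsum_ext. reflexivity.
  - rewrite rsum_S, IHn. rewrite <- rsum_plus. apply rsum_ext. intros. rewrite rsum_S. reflexivity.
Qed.

Lemma rsum_le n f g : (forall i, (i < n)%nat -> f i <= g i) -> rsum n f <= rsum n g.
Proof.
  induction n; intros H; [unfold rsum; simpl; lra|]. rewrite !rsum_S.
  specialize (IHn (fun i Hi => H i ltac:(lia))). specialize (H n ltac:(lia)). lra.
Qed.

Lemma rsum_nonneg n f : (forall i, (i < n)%nat -> 0 <= f i) -> 0 <= rsum n f.
Proof. intros H. rewrite <- (rsum_const0 n). apply rsum_le. exact H. Qed.

Lemma rsum_abs_bound n f B : (forall i, (i < n)%nat -> Rabs (f i) <= B) ->
  Rabs (rsum n f) <= INR n * B.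
Proof.
  induction n; intros H.
  - rewrite rsum_0, Rabs_R0. simpl. lra.
  - rewrite rsum_S, S_INR. specialize (IHn (fun i Hi => H i ltac:(lia))).
    specialize (H n ltac:(lia)).
    eapply Rle_trans; [apply Rabs_triang|]. lra.
Qed.

Lemma is_derive_cst (c t : R) : is_derive (fun _ : R => c) t 0.
Proof. auto_derive; auto. Qed.

Lemma rsum_derive n (g : nat -> R -> R) (dg : nat -> R) t :
  (forall i, (i < n)%nat -> is_derive (g i) t (dg i)) ->
  is_derive (fun s => rsum n (fun i => g i s)) t (rsum n dg).
Proof.
  induction n; intros H.
  - rewrite rsum_0. apply (is_derive_ext (fun _ => 0)). { intros; reflexivity. }
    apply is_derive_cst.
  - rewrite rsum_S. apply (is_derive_ext (fun s => rsum n (fun i => g i s) + g n s)).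
    { intros; rewrite rsum_S; reflexivity. }
    apply (is_derive_plus (fun s => rsum n (fun i => g i s)) (g n)).
    + apply IHn. intros; apply H; lia.
    + apply H; lia.
Qed.

Lemma rsum_filterlim {T} (F : (T -> Prop) -> Prop) {FF : Filter F} n (g : nat -> T -> R) (l : nat -> R) :
  (forall i, (i < n)%nat -> filterlim (g i) F (locally (l i))) ->
  filterlim (fun s => rsum n (fun i => g i s)) F (locally (rsum n l)).
Proof.
  induction n; intros H.
  - rewrite rsum_0. apply (filterlim_ext (fun _ => 0)). { intros; reflexivity. }
    apply filterlim_const.
  - rewrite rsum_S. apply (filterlim_ext (fun s => rsum n (fun i => g i s) + g n s)).
    { intros; rewrite rsum_S; reflexivity. }
    eapply filterlim_comp_2; [apply IHn; intros; apply H; lia | apply H; lia |].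
    exact (filterlim_plus (K:=R_AbsRing) (V:=R_NormedModule) (rsum n l) (l n)).
Qed.

Definition Dgap (N : nat) (m : R) (x v : nat -> R) : R :=
  rsum (N - 1) (fun k => Rpower (x (k + 1)%nat - x k) (- m) * (v (k + 1)%nat - v k)).

Definition Dpair (N : nat) (m : R) (x v : nat -> R) : R :=
  rsum_neq N (fun i j => sgn_nat j i * Rpower (Rabs (x i - x j)) (- m) * (v i - v j)).

Lemma sgn_anti i j : sgn_nat i j = - sgn_nat j i.
Proof.
  unfold sgn_nat. destruct (Nat.ltb_spec i j), (Nat.ltb_spec j i); try lia; lra.
Qed.

Lemma gap_part N m (x v : nat -> R) :
  rsum N (fun i => v i * ((if Nat.ltb (i + 1) N then - Rpower (x (i + 1)%nat - x i) (- m) else 0)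
    + (match i with O => 0 | S k => Rpower (x i - x k) (- m) end)))
  = Dgap N m x v.
Proof.
  unfold Dgap. destruct N as [|n]. { simpl. unfold rsum; simpl. ring. }
  replace (S n - 1)%nat with n by lia.
  rewrite (rsum_ext _ _ (fun i => v i * (if Nat.ltb (i + 1) (S n) then - Rpower (x (i + 1)%nat - x i) (- m) else 0)
     + v i * (match i with O => 0 | S k => Rpower (x i - x k) (- m) end))) by (intros; ring).
  rewrite rsum_plus. rewrite rsum_S, rsum_shift.
  replace (Nat.ltb (n+1) (S n)) with false by (symmetry; apply Nat.ltb_ge; lia).
  rewrite (rsum_ext n (fun i => v i * (if Nat.ltb (i + 1) (S n) then - Rpower (x (i + 1)%nat - x i) (- m) else 0))
     (fun k => - (v k * Rpower (x (k + 1)%nat - x k) (- m)))).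
  2:{ intros i Hi. replace (Nat.ltb (i+1) (S n)) with true by (symmetry; apply Nat.ltb_lt; lia). ring. }
  rewrite (rsum_ext n (fun i => v (S i) * Rpower (x (S i) - x i) (- m))
     (fun k => v (k+1)%nat * Rpower (x (k + 1)%nat - x k) (- m))).
  2:{ intros i Hi. rewrite Nat.add_1_r. reflexivity. }
  rewrite (rsum_ext n (fun k => Rpower (x (k + 1)%nat - x k) (- m) * (v (k + 1)%nat - v k))
    (fun k => v (k+1)%nat * Rpower (x (k + 1)%nat - x k) (- m) - v k * Rpower (x (k + 1)%nat - x k) (- m)))
    by (intros; ring).
  rewrite rsum_minus, rsum_opp. lra.
Qed.

Lemma pair_part N m chi (x v : nat -> R) :
  rsum N (fun i => v i * (2 * chi * rsum N (fun j => if Nat.eqb j i then 0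
                               else sgn_nat i j * Rpower (Rabs (x j - x i)) (- m))))
  = - chi * Dpair N m x v.
Proof.
  set (P1 := rsum N (fun i => rsum N (fun j => if Nat.eqb i j then 0 else
          sgn_nat j i * Rpower (Rabs (x i - x j)) (- m) * v i))).
  assert (HD : Dpair N m x v = 2 * P1).
  { unfold Dpair, rsum_neq.
    rewrite (rsum_ext N _ (fun i => rsum N (fun j => if Nat.eqb i j then 0 else
          sgn_nat j i * Rpower (Rabs (x i - x j)) (- m) * v i)
        - rsum N (fun j => if Nat.eqb i j then 0 else
          sgn_nat j i * Rpower (Rabs (x i - x j)) (- m) * v j))).
    2:{ intros i Hi. rewrite <- rsum_minus. apply rsum_ext. intros j Hj.
        destruct (Nat.eqb i j); ring. }
    rewrite rsum_minus. fold P1. rewrite rsum_swap.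
    assert (rsum N (fun j => rsum N (fun i => if Nat.eqb i j then 0 else
          sgn_nat j i * Rpower (Rabs (x i - x j)) (- m) * v j)) = - P1).
    { unfold P1. rewrite <- rsum_opp. apply rsum_ext. intros i Hi. rewrite <- rsum_opp.
      apply rsum_ext. intros j Hj. rewrite Nat.eqb_sym. destruct (Nat.eqb i j); [ring|].
      rewrite (sgn_anti i j), Rabs_minus_sym. ring. }
    rewrite H. ring. }
  rewrite HD. unfold P1. rewrite <- rsum_scal, <- rsum_scal. apply rsum_ext. intros i Hi.
  match goal with |- _ * (_ * ?S1) = _ * (_ * ?S2) => assert (HS : S2 = - v i * S1) end.
  { rewrite <- rsum_scal. apply rsum_ext. intros j Hj.
    destruct (Nat.eqb_spec i j) as [->|Hne]; [rewrite Nat.eqb_refl; ring|].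
    rewrite (proj2 (Nat.eqb_neq j i)) by lia.
    rewrite (sgn_anti i j), Rabs_minus_sym. ring. }
  rewrite HS. ring.
Qed.

Lemma flow_identity N m chi (x v : nat -> R) :
  rsum N (fun i => v i * flow_rhs N m chi x i) = Dgap N m x v - chi * Dpair N m x v.
Proof.
  unfold flow_rhs.
  rewrite (rsum_ext N _ (fun i => v i * ((if Nat.ltb (i + 1) N then - Rpower (x (i + 1)%nat - x i) (- m) else 0)
    + (match i with O => 0 | S k => Rpower (x i - x k) (- m) end))
    + v i * (2 * chi * rsum N (fun j => if Nat.eqb j i then 0
                               else sgn_nat i j * Rpower (Rabs (x j - x i)) (- m))))) by (intros; ring).
  rewrite rsum_plus, gap_part, pair_part. ring.
Qed.

Definition sep (N : nat) (d : R) (x : nat -> R) : Prop :=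
  forall i, (i + 1 < N)%nat -> d <= x (i + 1)%nat - x i.

Lemma sep_far N d x : 0 <= d -> sep N d x ->
  forall i j, (i < j)%nat -> (j < N)%nat -> d <= x j - x i.
Proof.
  intros Hd Hs i j. induction j as [|j IH]; intros Hij HjN; [lia|].
  assert (Hg := Hs j ltac:(lia)). rewrite Nat.add_1_r in Hg.
  destruct (Nat.eq_dec i j) as [->|Hne]; [lra|].
  specialize (IH ltac:(lia) ltac:(lia)). lra.
Qed.

Lemma ord_lt N x : (forall i, (i + 1 < N)%nat -> x i < x (i + 1)%nat) ->
  forall i j, (i < j)%nat -> (j < N)%nat -> x i < x j.
Proof.
  intros Hs i j. induction j as [|j IH]; intros Hij HjN; [lia|].
  assert (Hg := Hs j ltac:(lia)). rewrite Nat.add_1_r in Hg.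
  destruct (Nat.eq_dec i j) as [->|Hne]; [lra|].
  specialize (IH ltac:(lia) ltac:(lia)). lra.
Qed.

Lemma rp_pos a p : 0 < Rpower a p.
Proof. unfold Rpower. apply exp_pos. Qed.

Lemma rp_mono_neg d a m : 0 < d -> d <= a -> 0 <= m -> Rpower a (- m) <= Rpower d (- m).
Proof.
  intros Hd Ha Hm. rewrite !Rpower_Ropp. apply Rinv_le_contravar; [apply rp_pos|].
  apply Rle_Rpower_l; lra.
Qed.

Lemma rp_deriv a p : 0 < a -> is_derive (fun y => Rpower y p) a (p * Rpower a (p - 1)).
Proof. intros Ha. apply is_derive_Reals. apply derivable_pt_lim_power. exact Ha. Qed.

Lemma rp_cont a p : 0 < a -> continuity_pt (fun y => Rpower y p) a.
Proof.
  intros Ha. apply derivable_continuous_pt. exists (p * Rpower a (p - 1)).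
  apply derivable_pt_lim_power. exact Ha.
Qed.

Lemma rp_lip d a b m : 0 < d -> d <= a -> d <= b -> 0 <= m ->
  Rabs (Rpower a (- m) - Rpower b (- m)) <= m * Rpower d (- m - 1) * Rabs (a - b).
Proof.
  intros Hd Ha Hb Hm.
  destruct (MVT_gen (fun y => Rpower y (- m)) b a (fun y => - m * Rpower y (- m - 1)))
    as [c [Hc Heq]].
  - intros y Hy. apply rp_deriv.
    assert (Rmin b a >= d) by (unfold Rmin; destruct (Rle_dec b a); lra). lra.
  - intros y Hy. apply rp_cont.
    assert (Rmin b a >= d) by (unfold Rmin; destruct (Rle_dec b a); lra). lra.
  - rewrite Heq. assert (Hcd : d <= c) by (unfold Rmin in Hc; destruct (Rle_dec b a); lra).
    rewrite Rabs_mult. apply Rmult_le_compat_r; [apply Rabs_pos|].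
    rewrite Rabs_mult, Rabs_Ropp, (Rabs_pos_eq m) by lra.
    rewrite Rabs_pos_eq by (apply Rlt_le, rp_pos).
    apply Rmult_le_compat_l; [lra|].
    replace (- m - 1) with (- (m + 1)) by ring. apply rp_mono_neg; lra.
Qed.

Definition Kf (N : nat) (m chi d : R) : R := (2 + 2 * Rabs chi * INR N) * Rpower d (- m).
Definition Lf (N : nat) (m chi d : R) : R := (2 + 2 * Rabs chi * INR N) * (m * Rpower d (- m - 1)) * 2.

Lemma sgn_abs i j : Rabs (sgn_nat i j) <= 1.
Proof. unfold sgn_nat. destruct (Nat.ltb i j); [|destruct (Nat.ltb j i)];
  unfold Rabs; destruct Rcase_abs; lra. Qed.

Lemma sep_abs N d x i j : 0 <= d -> sep N d x -> i <> j -> (i < N)%nat -> (j < N)%nat ->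
  d <= Rabs (x j - x i).
Proof.
  intros Hd Hs Hne Hi Hj. destruct (Nat.lt_gt_cases i j) as [[H|H] _]; [lia| |].
  - pose proof (sep_far N d x Hd Hs i j H Hj). rewrite Rabs_pos_eq; lra.
  - pose proof (sep_far N d x Hd Hs j i H Hi). rewrite Rabs_left1; lra.
Qed.

Lemma flow_bound N m chi d x i : 0 < d -> 0 <= m -> sep N d x -> (i < N)%nat ->
  Rabs (flow_rhs N m chi x i) <= Kf N m chi d.
Proof.
  intros Hd Hm Hs Hi. unfold flow_rhs, Kf.
  set (R0 := Rpower d (- m)).
  assert (HA : Rabs (if Nat.ltb (i + 1) N then - Rpower (x (i + 1)%nat - x i) (- m) else 0) <= R0).
  { destruct (Nat.ltb_spec (i+1) N).
    - rewrite Rabs_Ropp, Rabs_pos_eq by (apply Rlt_le, rp_pos). apply rp_mono_neg; try lra.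
      apply Hs; lia.
    - rewrite Rabs_R0. apply Rlt_le, rp_pos. }
  assert (HB : Rabs (match i with O => 0 | S k => Rpower (x i - x k) (- m) end) <= R0).
  { destruct i as [|k].
    - rewrite Rabs_R0. apply Rlt_le, rp_pos.
    - rewrite Rabs_pos_eq by (apply Rlt_le, rp_pos). apply rp_mono_neg; try lra.
      pose proof (Hs k ltac:(lia)). rewrite Nat.add_1_r in H. exact H. }
  assert (HC : Rabs (rsum N (fun j => if Nat.eqb j i then 0
       else sgn_nat i j * Rpower (Rabs (x j - x i)) (- m))) <= INR N * R0).
  { apply rsum_abs_bound. intros j Hj. destruct (Nat.eqb_spec j i).
    - rewrite Rabs_R0. apply Rlt_le, rp_pos.
    - rewrite Rabs_mult. rewrite (Rabs_pos_eq (Rpower _ _)) by (apply Rlt_le, rp_pos).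
      pose proof (sgn_abs i j).
      assert (Rpower (Rabs (x j - x i)) (- m) <= R0).
      { apply rp_mono_neg; try lra. apply (sep_abs N d); auto; lra. }
      assert (0 <= Rpower (Rabs (x j - x i)) (- m)) by (apply Rlt_le, rp_pos).
      nra. }
  eapply Rle_trans; [apply Rabs_triang|].
  eapply Rle_trans; [apply Rplus_le_compat_r, Rabs_triang|].
  rewrite !Rabs_mult. rewrite (Rabs_pos_eq 2) by lra.
  assert (0 <= Rabs chi) by apply Rabs_pos.
  assert (0 <= INR N) by apply pos_INR.
  assert (0 <= 2 * Rabs chi) by lra.
  pose proof (Rmult_le_compat_l _ _ _ H1 HC). nra.
Qed.

Lemma term_lip d a b m e : 0 < d -> d <= a -> d <= b -> 0 <= m -> Rabs (a - b) <= 2 * e ->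
  Rabs (Rpower a (- m) - Rpower b (- m)) <= m * Rpower d (- m - 1) * (2 * e).
Proof.
  intros H1 H2 H3 H4 H5. eapply Rle_trans; [apply rp_lip; eauto|].
  apply Rmult_le_compat_l; [|lra]. pose proof (rp_pos d (- m - 1)). 
  apply Rmult_le_pos; lra.
Qed.

Lemma flow_lip N m chi d x y e i : 0 < d -> 0 <= m -> sep N d x -> sep N d y ->
  (forall k, (k < N)%nat -> Rabs (x k - y k) <= e) -> (i < N)%nat ->
  Rabs (flow_rhs N m chi x i - flow_rhs N m chi y i) <= Lf N m chi d * e.
Proof.
  intros Hd Hm Hx Hy He Hi. unfold flow_rhs, Lf.
  set (Q := m * Rpower d (- m - 1) * (2 * e)).
  assert (HQ : 0 <= Q).
  { unfold Q. pose proof (He i Hi). pose proof (Rabs_pos (x i - y i)).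
    apply Rmult_le_pos; [apply Rmult_le_pos; [lra|apply Rlt_le, rp_pos]|lra]. }
  assert (HA : Rabs ((if Nat.ltb (i + 1) N then - Rpower (x (i + 1)%nat - x i) (- m) else 0)
     - (if Nat.ltb (i + 1) N then - Rpower (y (i + 1)%nat - y i) (- m) else 0)) <= Q).
  { destruct (Nat.ltb_spec (i+1) N).
    - replace (- Rpower (x (i + 1)%nat - x i) (- m) - - Rpower (y (i + 1)%nat - y i) (- m))
        with (- (Rpower (x (i + 1)%nat - x i) (- m) - Rpower (y (i + 1)%nat - y i) (- m))) by ring.
      rewrite Rabs_Ropp. apply term_lip; auto.
      replace (x (i + 1)%nat - x i - (y (i + 1)%nat - y i)) with
        ((x (i + 1)%nat - y (i+1)%nat) - (x i - y i)) by ring.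
      eapply Rle_trans; [apply Rabs_triang|]. rewrite Rabs_Ropp.
      pose proof (He (i+1)%nat ltac:(lia)). pose proof (He i Hi). lra.
    - replace (0 - 0) with 0 by ring. rewrite Rabs_R0. exact HQ. }
  assert (HB : Rabs ((match i with O => 0 | S k => Rpower (x i - x k) (- m) end)
      - (match i with O => 0 | S k => Rpower (y i - y k) (- m) end)) <= Q).
  { destruct i as [|k].
    - replace (0 - 0) with 0 by ring. rewrite Rabs_R0. exact HQ.
    - pose proof (Hx k ltac:(lia)). pose proof (Hy k ltac:(lia)). rewrite Nat.add_1_r in *.
      apply term_lip; auto.
      replace (x (S k) - x k - (y (S k) - y k)) with
        ((x (S k) - y (S k)) - (x k - y k)) by ring.
      eapply Rle_trans; [apply Rabs_triang|]. rewrite Rabs_Ropp.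
      pose proof (He (S k) Hi). pose proof (He k ltac:(lia)). lra. }
  assert (HC : Rabs (rsum N (fun j => if Nat.eqb j i then 0
       else sgn_nat i j * Rpower (Rabs (x j - x i)) (- m)) -
       rsum N (fun j => if Nat.eqb j i then 0
       else sgn_nat i j * Rpower (Rabs (y j - y i)) (- m))) <= INR N * Q).
  { rewrite <- rsum_minus. apply rsum_abs_bound. intros j Hj. destruct (Nat.eqb_spec j i).
    - replace (0 - 0) with 0 by ring. rewrite Rabs_R0. exact HQ.
    - rewrite <- Rmult_minus_distr_l, Rabs_mult.
      pose proof (sgn_abs i j).
      assert (Rabs (Rpower (Rabs (x j - x i)) (- m) - Rpower (Rabs (y j - y i)) (- m)) <= Q).
      { apply term_lip; auto. 1,2: apply (sep_abs N d); auto; lra.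
        eapply Rle_trans; [apply Rabs_triang_inv2|].
        replace (x j - x i - (y j - y i)) with ((x j - y j) - (x i - y i)) by ring.
        eapply Rle_trans; [apply Rabs_triang|]. rewrite Rabs_Ropp.
        pose proof (He j Hj). pose proof (He i Hi). lra. }
      pose proof (Rabs_pos (sgn_nat i j)).
      pose proof (Rabs_pos (Rpower (Rabs (x j - x i)) (- m) - Rpower (Rabs (y j - y i)) (- m))).
      nra. }
  match goal with |- Rabs (?A1 + ?B1 + 2 * chi * ?C1 - (?A2 + ?B2 + 2 * chi * ?C2)) <= _ =>
    replace (A1 + B1 + 2 * chi * C1 - (A2 + B2 + 2 * chi * C2)) with
      ((A1 - A2) + (B1 - B2) + (2 * chi) * (C1 - C2)) by ring end.
  eapply Rle_trans; [apply Rabs_triang|].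
  eapply Rle_trans; [apply Rplus_le_compat_r, Rabs_triang|].
  rewrite Rabs_mult, Rabs_mult. rewrite (Rabs_pos_eq 2) by lra.
  fold Q. 
  assert (0 <= Rabs chi) by apply Rabs_pos.
  assert (0 <= INR N) by apply pos_INR.
  assert (0 <= 2 * Rabs chi) by lra.
  pose proof (Rmult_le_compat_l _ _ _ H1 HC).
  replace ((2 + 2 * Rabs chi * INR N) * (m * Rpower d (- m - 1)) * 2 * e) with
    ((2 + 2 * Rabs chi * INR N) * Q) by (unfold Q; ring).
  nra.
Qed.

Lemma le_eps a b : (forall eps, 0 < eps -> a <= b + eps) -> a <= b.
Proof.
  intros H. destruct (Rle_dec a b) as [|Hn]; [auto|].
  specialize (H ((a - b)/2) ltac:(lra)). lra.
Qed.

Lemma half_pow_small eps : 0 < eps -> exists n, forall k, (k >= n)%nat -> (1/2)^k < eps.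
Proof.
  intros He. destruct (pow_lt_1_zero (1/2) ltac:(rewrite Rabs_pos_eq; lra) eps He) as [n Hn].
  exists n. intros k Hk. specialize (Hn k Hk). rewrite Rabs_pos_eq in Hn; auto.
  apply pow_le. lra.
Qed.

Lemma half_pow_pos k : 0 < (1/2)^k.
Proof. apply pow_lt. lra. Qed.

Lemma lim_half a b C : (forall n, a <= b + C * (1/2)^n) -> a <= b.
Proof.
  intros H. apply le_eps. intros eps He.
  destruct (half_pow_small (eps / (Rabs C + 1))) as [n Hn].
  { apply Rdiv_lt_0_compat; [lra|]. pose proof (Rabs_pos C). lra. }
  specialize (Hn n (le_n n)). specialize (H n).
  pose proof (Rabs_pos C). pose proof (half_pow_pos n).
  assert (C * (1/2)^n <= Rabs C * (1/2)^n).
  { apply Rmult_le_compat_r; [lra|apply RRle_abs]. }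
  assert (Rabs C * (1/2)^n <= eps).
  { apply Rmult_lt_compat_l with (r := Rabs C + 1) in Hn; [|lra].
    replace ((Rabs C + 1) * (eps / (Rabs C + 1))) with eps in Hn by (field; lra). nra. }
  lra.
Qed.

Lemma geo_lim (u : nat -> R) C : 0 <= C ->
  (forall k n, Rabs (u (k + n)%nat - u k) <= C * (1/2)^k) ->
  forall k, Rabs (real (Lim_seq u) - u k) <= C * (1/2)^k.
Proof.
  intros HC Hu.
  assert (Hc : Cauchy_crit u).
  { intros eps He. destruct (half_pow_small (eps / (2 * (C + 1)))) as [K0 HK0].
    { apply Rdiv_lt_0_compat; lra. }
    exists K0. intros n m Hn Hm. unfold Rdist.
    pose proof (Hu K0 (n - K0)%nat) as H1. pose proof (Hu K0 (m - K0)%nat) as H2.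
    replace (K0 + (n - K0))%nat with n in H1 by lia.
    replace (K0 + (m - K0))%nat with m in H2 by lia.
    specialize (HK0 K0 (le_n _)). pose proof (half_pow_pos K0).
    assert (C * (1/2)^K0 < eps / 2).
    { apply Rmult_lt_compat_l with (r := 2 * (C + 1)) in HK0; [|lra].
      replace (2 * (C + 1) * (eps / (2 * (C + 1)))) with eps in HK0 by (field; lra). nra. }
    replace (u n - u m) with ((u n - u K0) - (u m - u K0)) by ring.
    eapply Rle_lt_trans; [apply Rabs_triang|]. rewrite Rabs_Ropp. lra. }
  destruct (Rcomplete.R_complete u Hc) as [l Hl].
  assert (HL : Lim_seq u = Finite l).
  { apply is_lim_seq_unique. apply is_lim_seq_Reals. exact Hl. }
  rewrite HL. simpl. intros k. apply le_eps. intros eps He.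
  destruct (Hl eps He) as [N1 HN1].
  specialize (HN1 (N1 + k)%nat ltac:(lia)). unfold Rdist in HN1.
  specialize (Hu k N1). replace (k + N1)%nat with (N1 + k)%nat in Hu by lia.
  replace (l - u k) with ((u (N1 + k)%nat - u k) - (u (N1 + k)%nat - l)) by ring.
  eapply Rle_trans; [apply Rabs_triang|]. rewrite Rabs_Ropp. lra.
Qed.

Lemma lip_cont (f : R -> R) s C : 0 <= C -> (forall u, Rabs (f u - f s) <= C * Rabs (u - s)) ->
  continuous f s.
Proof.
  intros HC H. apply continuity_pt_filterlim.
  intros eps He. exists (eps / (C + 1)). split.
  { apply Rdiv_lt_0_compat; lra. }
  intros u [_ Hu]. simpl in *. unfold Rdist in *. specialize (H u).
  pose proof (Rabs_pos (u - s)).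
  apply Rmult_lt_compat_l with (r := C + 1) in Hu; [|lra].
  replace ((C + 1) * (eps / (C + 1))) with eps in Hu by (field; lra).
  assert (C * Rabs (u - s) <= (C + 1) * Rabs (u - s)) by (rewrite Rmult_plus_distr_r, Rmult_1_l; lra). lra.
Qed.

Lemma RInt_minus_R (f g : R -> R) a b : ex_RInt f a b -> ex_RInt g a b ->
  RInt (fun x => f x - g x) a b = RInt f a b - RInt g a b.
Proof. intros. apply (RInt_minus f g a b); auto. Qed.

Lemma exR (g : R -> R) u w : (forall s, continuous g s) -> ex_RInt g u w.
Proof. intros Hc. apply (ex_RInt_continuous (V:=R_CompleteNormedModule)). intros; apply Hc. Qed.

Lemma RInt_bound (g : R -> R) u w K : (forall s, continuous g s) ->
  (forall s, Rabs (g s) <= K) -> Rabs (RInt g u w) <= K * Rabs (w - u).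
Proof.
  intros Hc Hb. destruct (Rle_dec u w).
  - rewrite (Rabs_pos_eq (w - u)) by lra. rewrite Rmult_comm.
    apply abs_RInt_le_const; auto. apply exR; auto.
  - rewrite <- (opp_RInt_swap g w u) by (apply exR; auto).
    change (Rabs (- RInt g w u) <= K * Rabs (w - u)). rewrite Rabs_Ropp.
    rewrite (Rabs_left (w - u)) by lra. replace (- (w - u)) with (u - w) by ring.
    rewrite Rmult_comm. apply abs_RInt_le_const; try lra; auto.
    apply exR; auto.
Qed.

Definition inBall (N : nat) (p : nat -> R) (r : R) (z : nat -> R) : Prop :=
  forall k, (k < N)%nat -> Rabs (z k - p k) <= r.

Definition PicHyp (N : nat) (Fv : (nat -> R) -> nat -> R) (p : nat -> R) (r K L h : R) : Prop :=
  0 < r /\ 0 <= K /\ 0 <= L /\ 0 < h /\ h * K <= r /\ h * L <= 1/2 /\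
  (forall z, inBall N p r z -> forall i, (i < N)%nat -> Rabs (Fv z i) <= K) /\
  (forall z w e, inBall N p r z -> inBall N p r w -> (forall k, (k < N)%nat -> Rabs (z k - w k) <= e) ->
     forall i, (i < N)%nat -> Rabs (Fv z i - Fv w i) <= L * e).

Definition clamp (a h t : R) : R := Rmax a (Rmin (a + h) t).

Lemma clamp_range a h t : 0 < h -> a <= clamp a h t <= a + h.
Proof. intros. unfold clamp, Rmax, Rmin. repeat destruct Rle_dec; lra. Qed.

Lemma clamp_lip a h t t' : 0 < h -> Rabs (clamp a h t - clamp a h t') <= Rabs (t - t').
Proof. intros. unfold clamp, Rmax, Rmin. repeat destruct Rle_dec; unfold Rabs; repeat destruct Rcase_abs; lra. Qed.

Lemma clamp_id a h t : a <= t <= a + h -> clamp a h t = t.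
Proof. intros. unfold clamp, Rmax, Rmin. repeat destruct Rle_dec; lra. Qed.

Definition RI (g : R -> R) (a b : R) : R := RInt g a b.

Lemma RI_bound (g : R -> R) u w K : (forall s, continuous g s) ->
  (forall s, Rabs (g s) <= K) -> Rabs (RI g u w) <= K * Rabs (w - u).
Proof. apply RInt_bound. Qed.

Lemma RI_chasles (g : R -> R) a b c : (forall s, continuous g s) -> RI g a c = RI g a b + RI g b c.
Proof. intros. symmetry. apply (RInt_Chasles (V:=R_CompleteNormedModule)); apply exR; auto. Qed.

Fixpoint pic (N : nat) (Fv : (nat -> R) -> nat -> R) (p : nat -> R) (a h : R) (k : nat) : R -> nat -> R :=
  match k with
  | O => fun _ => p
  | S k' => fun t i => p i + RI (fun s => Fv (pic N Fv p a h k' s) i) a (clamp a h t)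
  end.

Definition Inv (N : nat) (p : nat -> R) (r K : R) (Z : R -> nat -> R) : Prop :=
  (forall t, inBall N p r (Z t)) /\
  (forall t t' i, (i < N)%nat -> Rabs (Z t i - Z t' i) <= K * Rabs (t - t')).

Lemma inv_cont N Fv p r K L h Z : PicHyp N Fv p r K L h -> Inv N p r K Z ->
  forall i, (i < N)%nat -> forall s, continuous (fun u => Fv (Z u) i) s.
Proof.
  intros (Hr & HK0 & HL0 & Hh & HhK & HhL & HK & HL) [HB HZ] i Hi s.
  apply (lip_cont _ _ (L * K)). { apply Rmult_le_pos; auto. }
  intros u. rewrite Rmult_assoc. apply HL; auto.
Qed.

Lemma pic_inv N Fv p r K L a h : PicHyp N Fv p r K L h ->
  forall k, Inv N p r K (pic N Fv p a h k).
Proof.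
  intros HP. pose proof HP as (Hr & HK0 & HL0 & Hh & HhK & HhL & HK & HL).
  induction k as [|k IH].
  - split.
    + intros t j Hj. simpl. replace (p j - p j) with 0 by ring. rewrite Rabs_R0. lra.
    + intros t t' j Hj. simpl. replace (p j - p j) with 0 by ring. rewrite Rabs_R0.
      apply Rmult_le_pos; auto. apply Rabs_pos.
  - pose proof (inv_cont _ _ _ _ _ _ _ _ HP IH) as Hc.
    assert (Hg : forall i, (i < N)%nat -> forall s, Rabs (Fv (pic N Fv p a h k s) i) <= K).
    { intros i Hi s. apply HK; auto. apply IH. }
    split.
    + intros t j Hj. simpl. replace (p j + RI (fun s => Fv (pic N Fv p a h k s) j) a (clamp a h t) - p j)
        with (RI (fun s => Fv (pic N Fv p a h k s) j) a (clamp a h t)) by ring.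
      eapply Rle_trans; [apply RI_bound; [apply Hc; auto | intros; apply Hg; auto]|].
      pose proof (clamp_range a h t Hh). rewrite Rabs_pos_eq by lra. nra.
    + intros t t' j Hj. simpl.
      set (g := fun s => Fv (pic N Fv p a h k s) j).
      rewrite (RI_chasles g a (clamp a h t') (clamp a h t)) by (apply Hc; auto).
      replace (p j + (RI g a (clamp a h t') + RI g (clamp a h t') (clamp a h t)) - (p j + RI g a (clamp a h t')))
        with (RI g (clamp a h t') (clamp a h t)) by ring.
      eapply Rle_trans; [apply RI_bound; [apply Hc; auto | intros; apply Hg; auto]|].
      apply Rmult_le_compat_l; auto. apply clamp_lip; auto.
Qed.

Lemma contR_minus (f g : R -> R) s : continuous f s -> continuous g s ->
  continuous (fun x => f x - g x) s.
Proof. intros. apply (continuous_minus (V:=R_NormedModule) f g s); auto. Qed.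

Lemma RI_minus (f g : R -> R) a b : (forall s, continuous f s) -> (forall s, continuous g s) ->
  RI (fun s => f s - g s) a b = RI f a b - RI g a b.
Proof. intros. unfold RI. apply RInt_minus_R; apply exR; auto. Qed.

Lemma pic_contr N Fv p r K L a h : PicHyp N Fv p r K L h ->
  forall k t i, (i < N)%nat ->
  Rabs (pic N Fv p a h (S k) t i - pic N Fv p a h k t i) <= r * (1/2)^k.
Proof.
  intros HP. pose proof HP as (Hr & HK0 & HL0 & Hh & HhK & HhL & HK & HL).
  induction k as [|k IH]; intros t i Hi.
  - simpl. replace (p i + RI (fun s => Fv p i) a (clamp a h t) - p i) with (RI (fun s => Fv p i) a (clamp a h t)) by ring.
    eapply Rle_trans; [apply RI_bound|].
    + intros; apply continuous_const.
    + intros s. apply HK; auto. intros j Hj. replace (p j - p j) with 0 by ring. rewrite Rabs_R0. lra.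
    + pose proof (clamp_range a h t Hh). rewrite Rabs_pos_eq by lra. nra.
  - pose proof (inv_cont _ _ _ _ _ _ _ _ HP (pic_inv _ _ _ _ _ _ a _ HP k) i Hi) as Hc0.
    pose proof (inv_cont _ _ _ _ _ _ _ _ HP (pic_inv _ _ _ _ _ _ a _ HP (S k)) i Hi) as Hc1.
    change (Rabs ((p i + RI (fun s => Fv (pic N Fv p a h (S k) s) i) a (clamp a h t)) -
                  (p i + RI (fun s => Fv (pic N Fv p a h k s) i) a (clamp a h t))) <= r * (1/2)^(S k)).
    replace ((p i + RI (fun s => Fv (pic N Fv p a h (S k) s) i) a (clamp a h t)) -
                  (p i + RI (fun s => Fv (pic N Fv p a h k s) i) a (clamp a h t))) with
      (RI (fun s => Fv (pic N Fv p a h (S k) s) i) a (clamp a h t) - RI (fun s => Fv (pic N Fv p a h k s) i) a (clamp a h t)) by ring.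
    rewrite <- RI_minus by auto.
    eapply Rle_trans; [apply (RI_bound _ _ _ (L * (r * (1/2)^k)))|].
    + intros s. apply contR_minus; auto.
    + intros s. apply HL; auto.
      * apply (proj1 (pic_inv _ _ _ _ _ _ a _ HP (S k))).
      * apply (proj1 (pic_inv _ _ _ _ _ _ a _ HP k)).
    + pose proof (clamp_range a h t Hh). rewrite (Rabs_pos_eq (clamp a h t - a)) by lra.
      pose proof (half_pow_pos k). simpl.
      assert (0 <= r * (1/2)^k) by (apply Rmult_le_pos; lra).
      assert (L * (r * (1/2)^k) * (clamp a h t - a) <= h * L * (r * (1/2)^k)).
      { replace (h * L * (r * (1/2)^k)) with (L * (r * (1/2)^k) * h) by ring.
        apply Rmult_le_compat_l; [apply Rmult_le_pos|]; lra. }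
      nra.
Qed.

Lemma pic_cauchy N Fv p r K L a h : PicHyp N Fv p r K L h ->
  forall k n t i, (i < N)%nat ->
  Rabs (pic N Fv p a h (k + n) t i - pic N Fv p a h k t i) <= 2 * r * (1/2)^k.
Proof.
  intros HP k n t i Hi. pose proof HP as (Hr & _).
  assert (forall n, Rabs (pic N Fv p a h (k + n) t i - pic N Fv p a h k t i) <= 2 * r * (1/2)^k * (1 - (1/2)^n)).
  { induction n0.
    - rewrite Nat.add_0_r. replace (_ - _) with 0 by ring. rewrite Rabs_R0. simpl. lra.
    - replace (k + S n0)%nat with (S (k + n0)) by lia.
      pose proof (pic_contr _ _ _ _ _ _ a _ HP (k + n0) t i Hi).
      rewrite pow_add in H. simpl pow.
      replace (pic N Fv p a h (S (k + n0)) t i - pic N Fv p a h k t i) with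
        ((pic N Fv p a h (S (k + n0)) t i - pic N Fv p a h (k + n0) t i) +
         (pic N Fv p a h (k + n0) t i - pic N Fv p a h k t i)) by ring.
      eapply Rle_trans; [apply Rabs_triang|].
      pose proof (half_pow_pos k). pose proof (half_pow_pos n0).
      assert (r * (1/2)^k * (1/2)^n0 = 2 * r * (1/2)^k * ((1/2)^n0 - 1/2 * (1/2)^n0)) by field.
      lra. }
  specialize (H n). pose proof (half_pow_pos n). pose proof (half_pow_pos k).
  assert (0 <= 2 * r * (1/2)^k) by (apply Rmult_le_pos; lra).
  nra.
Qed.

Lemma loc_int a b t : a < t < b -> locally t (fun s => a < s < b).
Proof.
  intros H. apply (locally_interval _ t (Finite a) (Finite b)); simpl; try lra.
  intros y H1 H2. lra.
Qed.

Definition Zlim (N : nat) (Fv : (nat -> R) -> nat -> R) (p : nat -> R) (a h : R) (t : R) (i : nat) : R :=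
  real (Lim_seq (fun k => pic N Fv p a h k t i)).

Lemma Z_close N Fv p r K L a h : PicHyp N Fv p r K L h ->
  forall k t i, (i < N)%nat -> Rabs (Zlim N Fv p a h t i - pic N Fv p a h k t i) <= 2 * r * (1/2)^k.
Proof.
  intros HP k t i Hi. pose proof HP as (Hr & _). unfold Zlim.
  apply (geo_lim (fun k => pic N Fv p a h k t i)); [lra|].
  intros. apply (pic_cauchy _ _ _ _ _ _ a _ HP); auto.
Qed.

Lemma Z_inv N Fv p r K L a h : PicHyp N Fv p r K L h -> Inv N p r K (Zlim N Fv p a h).
Proof.
  intros HP. pose proof HP as (Hr & HK0 & _). split.
  - intros t k Hk. apply (lim_half _ _ (2 * r)). intros n.
    pose proof (Z_close _ _ _ _ _ _ a _ HP n t k Hk).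
    pose proof (proj1 (pic_inv _ _ _ _ _ _ a _ HP n) t k Hk).
    replace (Zlim N Fv p a h t k - p k) with ((Zlim N Fv p a h t k - pic N Fv p a h n t k) + (pic N Fv p a h n t k - p k)) by ring.
    eapply Rle_trans; [apply Rabs_triang|]. lra.
  - intros t t' k Hk. apply (lim_half _ _ (4 * r)). intros n.
    pose proof (Z_close _ _ _ _ _ _ a _ HP n t k Hk).
    pose proof (Z_close _ _ _ _ _ _ a _ HP n t' k Hk).
    pose proof (proj2 (pic_inv _ _ _ _ _ _ a _ HP n) t t' k Hk).
    replace (Zlim N Fv p a h t k - Zlim N Fv p a h t' k) with
      ((Zlim N Fv p a h t k - pic N Fv p a h n t k) - (Zlim N Fv p a h t' k - pic N Fv p a h n t' k)
       + (pic N Fv p a h n t k - pic N Fv p a h n t' k)) by ring.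
    eapply Rle_trans; [apply Rabs_triang|].
    eapply Rle_trans; [apply Rplus_le_compat_r, Rabs_triang|]. rewrite Rabs_Ropp. lra.
Qed.

Lemma Z_eq N Fv p r K L a h : PicHyp N Fv p r K L h ->
  forall t i, (i < N)%nat ->
  Zlim N Fv p a h t i = p i + RI (fun s => Fv (Zlim N Fv p a h s) i) a (clamp a h t).
Proof.
  intros HP t i Hi. pose proof HP as (Hr & HK0 & HL0 & Hh & HhK & HhL & HK & HL).
  set (Z := Zlim N Fv p a h).
  assert (Habs : Rabs (Z t i - (p i + RI (fun s => Fv (Z s) i) a (clamp a h t))) <= 0).
  { apply (lim_half _ _ (2 * r)). intros n.
    pose proof (Z_close _ _ _ _ _ _ a _ HP (S n) t i Hi). fold Z in H. simpl in H.
    pose proof (inv_cont _ _ _ _ _ _ _ _ HP (pic_inv _ _ _ _ _ _ a _ HP n) i Hi) as Hc0.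
    pose proof (inv_cont _ _ _ _ _ _ _ _ HP (Z_inv _ _ _ _ _ _ a _ HP) i Hi) as HcZ.
    replace (Z t i - (p i + RI (fun s => Fv (Z s) i) a (clamp a h t))) with
      ((Z t i - (p i + RI (fun s => Fv (pic N Fv p a h n s) i) a (clamp a h t)))
       + (RI (fun s => Fv (pic N Fv p a h n s) i - Fv (Z s) i) a (clamp a h t))).
    2:{ rewrite RI_minus by auto. ring. }
    eapply Rle_trans; [apply Rabs_triang|].
    assert (Rabs (RI (fun s => Fv (pic N Fv p a h n s) i - Fv (Z s) i) a (clamp a h t)) <= r * (1/2)^n).
    { eapply Rle_trans; [apply (RI_bound _ _ _ (L * (2 * r * (1/2)^n)))|].
      + intros s. apply contR_minus; auto.
      + intros s. apply HL; auto.
        * apply (proj1 (pic_inv _ _ _ _ _ _ a _ HP n)).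
        * apply (proj1 (Z_inv _ _ _ _ _ _ a _ HP)).
        * intros k Hk. rewrite <- Rabs_Ropp. replace (- (pic N Fv p a h n s k - Z s k)) with
            (Z s k - pic N Fv p a h n s k) by ring. apply (Z_close _ _ _ _ _ _ a _ HP); auto.
      + pose proof (clamp_range a h t Hh). rewrite (Rabs_pos_eq (clamp a h t - a)) by lra.
        pose proof (half_pow_pos n).
        assert (0 <= 2 * r * (1/2)^n) by (apply Rmult_le_pos; lra).
        assert (L * (2 * r * (1/2)^n) * (clamp a h t - a) <= h * L * (2 * r * (1/2)^n)).
        { replace (h * L * (2 * r * (1/2)^n)) with (L * (2 * r * (1/2)^n) * h) by ring.
          apply Rmult_le_compat_l; [apply Rmult_le_pos|]; lra. }
        nra. }
    pose proof (half_pow_pos n).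
    assert (2 * r * (1/2 * (1/2)^n) = r * (1/2)^n) by field. lra. }
  pose proof (Rabs_pos (Z t i - (p i + RI (fun s => Fv (Z s) i) a (clamp a h t)))).
  assert (Rabs (Z t i - (p i + RI (fun s => Fv (Z s) i) a (clamp a h t))) = 0) by lra.
  apply Rabs_eq_0 in H0. lra.
Qed.

Lemma Z_deriv N Fv p r K L a h : PicHyp N Fv p r K L h ->
  forall t i, (i < N)%nat -> a < t < a + h ->
  is_derive (fun s => Zlim N Fv p a h s i) t (Fv (Zlim N Fv p a h t) i).
Proof.
  intros HP t i Hi Ht. set (Z := Zlim N Fv p a h).
  pose proof (inv_cont _ _ _ _ _ _ _ _ HP (Z_inv _ _ _ _ _ _ a _ HP) i Hi) as HcZ.
  set (g := fun s => Fv (Z s) i).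
  apply (is_derive_ext_loc (fun s => p i + RI g a s)).
  { generalize (loc_int a (a + h) t Ht). apply filter_imp. intros s Hs.
    unfold Z. rewrite (Z_eq _ _ _ _ _ _ a _ HP s i Hi). rewrite clamp_id by lra. reflexivity. }
  replace (Fv (Z t) i) with (0 + g t) by (unfold g; ring).
  apply (is_derive_plus (fun _ => p i) (fun s => RI g a s)).
  { apply is_derive_cst. }
  unfold RI. apply (is_derive_RInt g (RInt g a) a t).
  - apply filter_forall. intros b0. apply (RInt_correct (V:=R_CompleteNormedModule)). apply exR. exact HcZ.
  - apply HcZ.
Qed.

Lemma Z_unique N Fv p r K L a h : PicHyp N Fv p r K L h ->
  forall (W : R -> nat -> R) b, a <= b <= a + h ->
  (forall s, a <= s <= b -> inBall N p r (W s) /\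
     forall i, (i < N)%nat -> is_RInt (fun u => Fv (W u) i) a s (W s i - p i)) ->
  forall s i, a <= s <= b -> (i < N)%nat -> W s i = Zlim N Fv p a h s i.
Proof.
  intros HP W b Hb HW. pose proof HP as (Hr & HK0 & HL0 & Hh & HhK & HhL & HK & HL).
  set (Z := Zlim N Fv p a h).
  assert (Hc : forall n s i, a <= s <= b -> (i < N)%nat -> Rabs (W s i - Z s i) <= 2 * r * (1/2)^n).
  { induction n as [|n IH]; intros s i Hs Hi.
    - simpl. replace (W s i - Z s i) with ((W s i - p i) - (Z s i - p i)) by ring.
      eapply Rle_trans; [apply Rabs_triang|]. rewrite Rabs_Ropp.
      pose proof (proj1 (HW s Hs) i Hi). pose proof (proj1 (Z_inv _ _ _ _ _ _ a _ HP) s i Hi). fold Z in H0. lra.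
    - pose proof (inv_cont _ _ _ _ _ _ _ _ HP (Z_inv _ _ _ _ _ _ a _ HP) i Hi) as HcZ.
      assert (HWi := proj2 (HW s Hs) i Hi).
      assert (HZs : Z s i = p i + RI (fun u => Fv (Z u) i) a s).
      { unfold Z. rewrite (Z_eq _ _ _ _ _ _ a _ HP s i Hi). rewrite clamp_id by lra. reflexivity. }
      assert (HWs : W s i - p i = RI (fun u => Fv (W u) i) a s).
      { unfold RI. symmetry. apply (is_RInt_unique (V:=R_CompleteNormedModule)). exact HWi. }
      assert (Hex1 : ex_RInt (fun u => Fv (W u) i) a s) by (eexists; exact HWi).
      assert (Hex2 : ex_RInt (fun u => Fv (Z u) i) a s) by (apply exR; auto).
      replace (W s i - Z s i) with (RInt (fun u => Fv (W u) i - Fv (Z u) i) a s).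
      2:{ rewrite RInt_minus_R by auto. rewrite HZs. fold (RI (fun u => Fv (W u) i) a s).
          fold (RI (fun u => Fv (Z u) i) a s). lra. }
      eapply Rle_trans.
      { apply (abs_RInt_le_const _ a s (L * (2 * r * (1/2)^n))); [lra| |].
        - apply (ex_RInt_minus (V:=R_NormedModule)); auto.
        - intros u Hu. apply HL; auto.
          + apply (HW u ltac:(lra)).
          + apply (proj1 (Z_inv _ _ _ _ _ _ a _ HP)).
          + intros k Hk. apply IH; auto. lra. }
      pose proof (half_pow_pos n).
      assert (0 <= 2 * r * (1/2)^n) by (apply Rmult_le_pos; lra).
      assert ((s - a) * (L * (2 * r * (1/2)^n)) <= h * L * (2 * r * (1/2)^n)).
      { replace (h * L * (2 * r * (1/2)^n)) with (h * (L * (2 * r * (1/2)^n))) by ring.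
        apply Rmult_le_compat_r; [apply Rmult_le_pos|]; lra. }
      simpl. assert (2 * r * (1/2 * (1/2)^n) = r * (1/2)^n) by field. nra. }
  intros s i Hs Hi.
  assert (Rabs (W s i - Z s i) <= 0).
  { apply (lim_half _ _ (2 * r)). intros n. rewrite Rplus_0_l. apply Hc; auto. }
  pose proof (Rabs_pos (W s i - Z s i)).
  assert (Rabs (W s i - Z s i) = 0) by lra. apply Rabs_eq_0 in H1. fold Z. lra.
Qed.

Lemma ballR (x e y : R) : ball x e y <-> Rabs (y - x) < e.
Proof. split; intros H; exact H. Qed.

Lemma fl_minus {T} (F : (T -> Prop) -> Prop) {FF : Filter F} (f g : T -> R) a b :
  filterlim f F (locally a) -> filterlim g F (locally b) ->
  filterlim (fun s => f s - g s) F (locally (a - b)).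
Proof.
  intros Hf Hg. apply filterlim_locally. intros eps.
  assert (He2 : 0 < eps / 2) by (destruct eps; simpl; lra).
  pose proof (proj1 (filterlim_locally f a) Hf (mkposreal _ He2)) as H1.
  pose proof (proj1 (filterlim_locally g b) Hg (mkposreal _ He2)) as H2.
  generalize (filter_and _ _ H1 H2). apply filter_imp. intros s [A B].
  change (Rabs (f s - a) < eps/2) in A. change (Rabs (g s - b) < eps/2) in B.
  change (Rabs (f s - g s - (a - b)) < eps).
  replace (f s - g s - (a - b)) with ((f s - a) - (g s - b)) by ring.
  eapply Rle_lt_trans; [apply Rabs_triang|]. rewrite Rabs_Ropp. lra.
Qed.

Lemma fl_cont {T} (F : (T -> Prop) -> Prop) {FF : Filter F} (f : T -> R) (h : R -> R) a :
  filterlim f F (locally a) -> continuous h a -> filterlim (fun s => h (f s)) F (locally (h a)).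
Proof. intros Hf Hh. eapply filterlim_comp; eauto. Qed.

Lemma cont_scal c a : continuous (fun y => c * y) a.
Proof.
  apply (lip_cont _ _ (Rabs c)); [apply Rabs_pos|]. intros u.
  rewrite <- Rabs_mult. right. f_equal. ring.
Qed.

Lemma cont_abs a : continuous Rabs a.
Proof.
  apply (lip_cont _ _ 1); [lra|]. intros u. rewrite Rmult_1_l. apply Rabs_triang_inv2.
Qed.

Lemma cont_rp a p : 0 < a -> continuous (fun y => Rpower y p) a.
Proof. intros. apply continuity_pt_filterlim. apply rp_cont. auto. Qed.

Lemma der_rp (u : R -> R) t du p : is_derive u t du -> 0 < u t ->
  is_derive (fun s => Rpower (u s) p) t (p * Rpower (u t) (p - 1) * du).
Proof.
  intros Hu Hp. replace (p * Rpower (u t) (p - 1) * du) with (scal du (p * Rpower (u t) (p - 1))).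
  2:{ unfold scal; simpl; unfold mult; simpl. ring. }
  apply (is_derive_comp (fun y => Rpower y p) u). { apply rp_deriv; auto. } exact Hu.
Qed.

Lemma der_sub (u w : R -> R) t du dw : is_derive u t du -> is_derive w t dw ->
  is_derive (fun s => u s - w s) t (du - dw).
Proof. intros. apply (is_derive_minus u w t du dw); auto. Qed.

Lemma der_abs (u : R -> R) t du : is_derive u t du -> u t <> 0 ->
  is_derive (fun s => Rabs (u s)) t (sign (u t) * du).
Proof. intros. apply is_derive_Rabs; auto. Qed.

Definition ordered (N : nat) (x : nat -> R) : Prop :=
  forall i, (i + 1 < N)%nat -> x i < x (i + 1)%nat.

Lemma sign_sgn N x i j : ordered N x -> i <> j -> (i < N)%nat -> (j < N)%nat ->
  sign (x i - x j) = sgn_nat j i.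
Proof.
  intros Ho Hne Hi Hj. unfold sgn_nat.
  destruct (Nat.lt_gt_cases i j) as [[H|H] _]; [lia| |].
  - pose proof (ord_lt N x Ho i j H Hj). rewrite sign_eq_m1 by lra.
    replace (Nat.ltb j i) with false by (symmetry; apply Nat.ltb_ge; lia).
    replace (Nat.ltb i j) with true by (symmetry; apply Nat.ltb_lt; lia). reflexivity.
  - pose proof (ord_lt N x Ho j i H Hi). rewrite sign_eq_1 by lra.
    replace (Nat.ltb j i) with true by (symmetry; apply Nat.ltb_lt; lia). reflexivity.
Qed.

Lemma dgap_sum N m (Xc : R -> nat -> R) t (V : nat -> R) :
  ordered N (Xc t) -> (forall i, (i < N)%nat -> is_derive (fun s => Xc s i) t (V i)) ->
  is_derive (fun s => gap_sum N m (Xc s)) t ((1 - m) * Dgap N m (Xc t) V).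
Proof.
  intros Ho Hd. unfold gap_sum, Dgap. rewrite <- rsum_scal.
  apply (rsum_derive (N - 1) (fun i s => Rpower (Xc s (i + 1)%nat - Xc s i) (1 - m))).
  intros i Hi.
  replace ((1 - m) * (Rpower (Xc t (i + 1)%nat - Xc t i) (- m) * (V (i + 1)%nat - V i))) with
    ((1 - m) * Rpower (Xc t (i + 1)%nat - Xc t i) (1 - m - 1) * (V (i + 1)%nat - V i)).
  2:{ replace (1 - m - 1) with (- m) by ring. ring. }
  apply (der_rp (fun s => Xc s (i + 1)%nat - Xc s i)).
  - apply der_sub; apply Hd; lia.
  - pose proof (Ho i ltac:(lia)). lra.
Qed.

Lemma dpair_sum N m (Xc : R -> nat -> R) t (V : nat -> R) :
  ordered N (Xc t) -> (forall i, (i < N)%nat -> is_derive (fun s => Xc s i) t (V i)) ->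
  is_derive (fun s => pair_sum N m (Xc s)) t ((1 - m) * Dpair N m (Xc t) V).
Proof.
  intros Ho Hd. unfold pair_sum, Dpair, rsum_neq. rewrite <- rsum_scal.
  apply (rsum_derive N (fun i s => rsum N (fun j => if Nat.eqb i j then 0 else Rpower (Rabs (Xc s i - Xc s j)) (1 - m)))).
  intros i Hi. rewrite <- rsum_scal.
  apply (rsum_derive N (fun j s => if Nat.eqb i j then 0 else Rpower (Rabs (Xc s i - Xc s j)) (1 - m))).
  intros j Hj. destruct (Nat.eqb_spec i j) as [->|Hne].
  - rewrite Rmult_0_r. apply is_derive_cst.
  - assert (Hlt : Xc t i - Xc t j <> 0).
    { destruct (Nat.lt_gt_cases i j) as [[H|H] _]; [lia| |].
      - pose proof (ord_lt N _ Ho i j H Hj). lra.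
      - pose proof (ord_lt N _ Ho j i H Hi). lra. }
    replace ((1 - m) * (sgn_nat j i * Rpower (Rabs (Xc t i - Xc t j)) (- m) * (V i - V j))) with
      ((1 - m) * Rpower (Rabs (Xc t i - Xc t j)) (1 - m - 1) * (sign (Xc t i - Xc t j) * (V i - V j))).
    2:{ rewrite (sign_sgn N (Xc t) i j) by auto. replace (1 - m - 1) with (- m) by ring. ring. }
    apply (der_rp (fun s => Rabs (Xc s i - Xc s j))).
    + apply (der_abs (fun s => Xc s i - Xc s j)); auto. apply der_sub; apply Hd; auto.
    + apply Rabs_pos_lt. auto.
Qed.

Lemma rp_mul a m : 0 < a -> Rpower a (- m) * a = Rpower a (1 - m).
Proof.
  intros Ha. replace (1 - m) with (- m + 1) by ring. rewrite Rpower_plus, Rpower_1 by auto. ring.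
Qed.

Lemma Dgap_self N m x : ordered N x -> Dgap N m x x = gap_sum N m x.
Proof.
  intros Ho. unfold Dgap, gap_sum. apply rsum_ext. intros i Hi.
  apply rp_mul. pose proof (Ho i ltac:(lia)). lra.
Qed.

Lemma Dpair_self N m x : ordered N x -> Dpair N m x x = pair_sum N m x.
Proof.
  intros Ho. unfold Dpair, pair_sum, rsum_neq. apply rsum_ext. intros i Hi. apply rsum_ext. intros j Hj.
  destruct (Nat.eqb_spec i j) as [->|Hne]; [reflexivity|].
  rewrite <- (sign_sgn N x i j) by auto.
  assert (Hlt : x i - x j <> 0).
  { destruct (Nat.lt_gt_cases i j) as [[H|H] _]; [lia| |].
    - pose proof (ord_lt N _ Ho i j H Hj). lra.
    - pose proof (ord_lt N _ Ho j i H Hi). lra. }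
  rewrite <- (rp_mul (Rabs (x i - x j))) by (apply Rabs_pos_lt; auto).
  set (d := x i - x j). fold d in Hlt.
  destruct (Rlt_dec d 0).
  - rewrite sign_eq_m1 by auto. rewrite (Rabs_left d) by auto. ring.
  - rewrite sign_eq_1 by lra. rewrite (Rabs_pos_eq d) by lra. ring.
Qed.

Lemma der_mul (u w : R -> R) t du dw : is_derive u t du -> is_derive w t dw ->
  is_derive (fun s => u s * w s) t (du * w t + u t * dw).
Proof. intros. apply (is_derive_mult (K:=R_AbsRing) u w t du dw); auto. intros; apply Rmult_comm. Qed.

Lemma energy_deriv N m chi (Xc : R -> nat -> R) t : 1 < m -> ordered N (Xc t) ->
  (forall i, (i < N)%nat -> is_derive (fun s => Xc s i) t (flow_rhs N m chi (Xc t) i)) ->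
  is_derive (fun s => FNm N m chi (Xc s)) t
    (- rsum N (fun i => flow_rhs N m chi (Xc t) i * flow_rhs N m chi (Xc t) i)).
Proof.
  intros Hm Ho Hd. unfold FNm.
  rewrite flow_identity.
  replace (- (Dgap N m (Xc t) (flow_rhs N m chi (Xc t)) - chi * Dpair N m (Xc t) (flow_rhs N m chi (Xc t))))
   with (/ (m - 1) * ((1 - m) * Dgap N m (Xc t) (flow_rhs N m chi (Xc t))) -
         chi / (m - 1) * ((1 - m) * Dpair N m (Xc t) (flow_rhs N m chi (Xc t)))) by (field; lra).
  apply der_sub; apply is_derive_scal; [apply dgap_sum | apply dpair_sum]; auto.
Qed.

Lemma moment_deriv N m chi (Xc : R -> nat -> R) t : 1 < m -> ordered N (Xc t) ->
  (forall i, (i < N)%nat -> is_derive (fun s => Xc s i) t (flow_rhs N m chi (Xc t) i)) ->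
  is_derive (fun s => rsum N (fun i => Xc s i * Xc s i)) t (2 * (m - 1) * FNm N m chi (Xc t)).
Proof.
  intros Hm Ho Hd.
  replace (2 * (m - 1) * FNm N m chi (Xc t)) with
    (rsum N (fun i => flow_rhs N m chi (Xc t) i * Xc t i + Xc t i * flow_rhs N m chi (Xc t) i)).
  2:{ rewrite rsum_plus.
      rewrite (rsum_ext N (fun i => flow_rhs N m chi (Xc t) i * Xc t i) (fun i => Xc t i * flow_rhs N m chi (Xc t) i))
        by (intros; ring).
      rewrite flow_identity, Dgap_self, Dpair_self by auto. unfold FNm. field. lra. }
  apply (rsum_derive N (fun i s => Xc s i * Xc s i)). intros i Hi. apply der_mul; auto.
Qed.

Lemma der_cont (u : R -> R) t du : is_derive u t du -> continuity_pt u t.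
Proof. intros H. apply continuity_pt_filterlim. apply (ex_derive_continuous (K:=R_AbsRing) (V:=R_NormedModule)). exists du; auto. Qed.

Lemma rbar_lt_le (u t : R) (T : Rbar) : u <= t -> Rbar_lt t T -> Rbar_lt u T.
Proof. intros. destruct T; simpl in *; auto; lra. Qed.

Lemma inRN_ord N x : inRN N x -> ordered N x.
Proof. intros [H _]. exact H. Qed.

Lemma F_lim N m chi X0 (X : R -> nat -> R) : inRN N X0 ->
  (forall i, (i < N)%nat -> filterlim (fun s => X s i) (at_right 0) (locally (X0 i))) ->
  filterlim (fun s => FNm N m chi (X s)) (at_right 0) (locally (FNm N m chi X0)).
Proof.
  intros [Ho _] Hl. unfold FNm.
  assert (FF : Filter (at_right 0)) by exact (@filter_filter _ _ (at_right_proper_filter 0)).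
  apply (fl_minus (at_right 0) (FF:=FF)).
  - apply (fl_cont (at_right 0) (FF:=FF) (fun s => gap_sum N m (X s)) (fun y => / (m - 1) * y)); [|apply cont_scal].
    unfold gap_sum.
    apply (rsum_filterlim (at_right 0) (FF:=FF) (N - 1) (fun i s => Rpower (X s (i + 1)%nat - X s i) (1 - m))
             (fun i => Rpower (X0 (i + 1)%nat - X0 i) (1 - m))).
    intros i Hi. apply (fl_cont (at_right 0) (FF:=FF) (fun s => X s (i + 1)%nat - X s i) (fun y => Rpower y (1 - m))).
    + apply (fl_minus (at_right 0) (FF:=FF)); apply Hl; lia.
    + apply cont_rp. pose proof (Ho i ltac:(lia)). lra.
  - apply (fl_cont (at_right 0) (FF:=FF) (fun s => pair_sum N m (X s)) (fun y => chi / (m - 1) * y)); [|apply cont_scal].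
    unfold pair_sum, rsum_neq.
    apply (rsum_filterlim (at_right 0) (FF:=FF) N (fun i s => rsum N (fun j => if Nat.eqb i j then 0 else Rpower (Rabs (X s i - X s j)) (1 - m)))
      (fun i => rsum N (fun j => if Nat.eqb i j then 0 else Rpower (Rabs (X0 i - X0 j)) (1 - m)))).
    intros i Hi.
    apply (rsum_filterlim (at_right 0) (FF:=FF) N (fun j s => if Nat.eqb i j then 0 else Rpower (Rabs (X s i - X s j)) (1 - m))
      (fun j => if Nat.eqb i j then 0 else Rpower (Rabs (X0 i - X0 j)) (1 - m))).
    intros j Hj. destruct (Nat.eqb_spec i j) as [->|Hne].
    + apply filterlim_const.
    + apply (fl_cont (at_right 0) (FF:=FF) (fun s => Rabs (X s i - X s j)) (fun y => Rpower y (1 - m))).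
      * apply (fl_cont (at_right 0) (FF:=FF) (fun s => X s i - X s j) Rabs); [|apply cont_abs].
        apply (fl_minus (at_right 0) (FF:=FF)); apply Hl; auto.
      * apply cont_rp. apply Rabs_pos_lt.
        destruct (Nat.lt_gt_cases i j) as [[H|H] _]; [lia| |].
        -- pose proof (ord_lt N _ Ho i j H Hj). lra.
        -- pose proof (ord_lt N _ Ho j i H Hi). lra.
Qed.

Lemma finite_time N m chi X0 T (X : R -> nat -> R) : 1 < m -> inRN N X0 -> FNm N m chi X0 < 0 ->
  is_solution N m chi X0 T X -> exists T0, T = Finite T0.
Proof.
  intros Hm HX0 HF (HT & H0 & HR & Hlim & Hder).
  set (E := fun s => FNm N m chi (X s)).
  set (M := fun s => rsum N (fun i => X s i * X s i)).
  assert (HdE : forall t, 0 < t -> Rbar_lt t T ->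
    is_derive E t (- rsum N (fun i => flow_rhs N m chi (X t) i * flow_rhs N m chi (X t) i))).
  { intros t Ht HtT. apply energy_deriv; [auto | apply inRN_ord, HR; auto; lra | intros; apply Hder; auto]. }
  assert (HdM : forall t, 0 < t -> Rbar_lt t T -> is_derive M t (2 * (m - 1) * E t)).
  { intros t Ht HtT. apply moment_deriv; [auto | apply inRN_ord, HR; auto; lra | intros; apply Hder; auto]. }
  assert (Hmono : forall s t, 0 < s -> s <= t -> Rbar_lt t T -> E t <= E s).
  { intros s t Hs Hst HtT.
    destruct (MVT_gen E s t (fun u => - rsum N (fun i => flow_rhs N m chi (X u) i * flow_rhs N m chi (X u) i)))
      as [c [Hc Heq]].
    - intros u Hu. rewrite Rmin_left, Rmax_right in Hu by lra. apply HdE; [lra|].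
      apply (rbar_lt_le u t); auto; lra.
    - intros u Hu. rewrite Rmin_left, Rmax_right in Hu by lra.
      eapply der_cont. apply HdE; [lra|]. apply (rbar_lt_le u t); auto; lra.
    - assert (0 <= rsum N (fun i => flow_rhs N m chi (X c) i * flow_rhs N m chi (X c) i)).
      { apply rsum_nonneg. intros. apply Rle_0_sqr. }
      assert (0 <= t - s) by lra. nra. }
  assert (Hs0 : exists s0, 0 < s0 /\ Rbar_lt s0 T /\ E s0 < 0).
  { assert (Hl := F_lim N m chi X0 X HX0 Hlim).
    assert (He : 0 < - FNm N m chi X0) by lra.
    pose proof (proj1 (filterlim_locally _ _) Hl (mkposreal _ He)) as Hev.
    destruct Hev as [d Hd]. simpl in Hd.
    set (Tf := match T with Finite a => a / 2 | _ => 1 end).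
    assert (HTf : 0 < Tf /\ Rbar_lt Tf T).
    { unfold Tf. destruct T; simpl in *; try lra; auto. }
    set (y := Rmin (d / 2) Tf).
    assert (Hy : 0 < y).
    { unfold y, Rmin. destruct (Rle_dec (d/2) Tf); destruct d; simpl; lra. }
    exists y. split; [auto|]. split.
    { apply (rbar_lt_le y Tf); [unfold y; apply Rmin_r | tauto]. }
    assert (Hb : ball 0 d y).
    { change (Rabs (y - 0) < d). rewrite Rminus_0_r, Rabs_pos_eq by lra.
      pose proof (Rmin_l (d/2) Tf). destruct d; simpl in *; fold y in H; lra. }
    specialize (Hd y Hb Hy). change (Rabs (E y - FNm N m chi X0) < - FNm N m chi X0) in Hd.
    apply Rabs_def2 in Hd. lra. }
  destruct Hs0 as (s0 & Hs0 & Hs0T & HEs0).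
  assert (Hbound : forall t, s0 <= t -> Rbar_lt t T ->
    t - s0 <= M s0 / (2 * (m - 1) * (- E s0))).
  { intros t Ht HtT.
    destruct (MVT_gen M s0 t (fun u => 2 * (m - 1) * E u)) as [c [Hc Heq]].
    - intros u Hu. rewrite Rmin_left, Rmax_right in Hu by lra. apply HdM; [lra|].
      apply (rbar_lt_le u t); auto; lra.
    - intros u Hu. rewrite Rmin_left, Rmax_right in Hu by lra.
      eapply der_cont. apply HdM; [lra|]. apply (rbar_lt_le u t); auto; lra.
    - rewrite Rmin_left, Rmax_right in Hc by lra.
      assert (HEc : E c <= E s0) by (apply Hmono; try lra; apply (rbar_lt_le c t); auto; lra).
      assert (HMt : 0 <= M t) by (apply rsum_nonneg; intros; apply Rle_0_sqr).
      assert (0 <= t - s0) by lra.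
      assert (2 * (m - 1) * E c * (t - s0) <= 2 * (m - 1) * E s0 * (t - s0)).
      { apply Rmult_le_compat_r; auto. apply Rmult_le_compat_l; lra. }
      apply Rmult_le_reg_r with (r := 2 * (m - 1) * (- E s0)).
      { apply Rmult_lt_0_compat; lra. }
      replace (M s0 / (2 * (m - 1) * - E s0) * (2 * (m - 1) * - E s0)) with (M s0) by (field; lra).
      nra. }
  destruct T as [T0| |].
  - exists T0. reflexivity.
  - exfalso. set (t := s0 + M s0 / (2 * (m - 1) * (- E s0)) + 1).
    assert (HM0 : 0 <= M s0) by (apply rsum_nonneg; intros; apply Rle_0_sqr).
    assert (0 <= M s0 / (2 * (m - 1) * (- E s0))).
    { apply Rdiv_le_0_compat; auto. apply Rmult_lt_0_compat; lra. }
    specialize (Hbound t ltac:(unfold t; lra) I). unfold t in Hbound. lra.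
  - simpl in HT. contradiction.
Qed.

Lemma inv_small eps : 0 < eps -> exists n : nat, / (INR n + 1) < eps.
Proof.
  intros He. destruct (archimed (/ eps)) as [H1 _].
  assert (Hp : 0 < / eps) by (apply Rinv_0_lt_compat; auto).
  exists (Z.to_nat (up (/ eps))).
  assert (Hz : (0 <= up (/ eps))%Z).
  { apply le_IZR. lra. }
  rewrite INR_IZR_INZ, Z2Nat.id by auto.
  set (u := IZR (up (/ eps))) in *.
  replace eps with (/ / eps) at 1 by (apply Rinv_inv).
  apply Rinv_lt_contravar; [|lra].
  apply Rmult_lt_0_compat; lra.
Qed.

Lemma lim_inv (u : nat -> R) l : (forall n, Rabs (u n - l) <= / (INR n + 1)) -> is_lim_seq u l.
Proof.
  intros H. apply is_lim_seq_Reals. intros eps He.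
  destruct (inv_small eps He) as [N0 HN0]. exists N0. intros n Hn. unfold Rdist.
  eapply Rle_lt_trans; [apply H|]. eapply Rle_lt_trans; [|exact HN0].
  apply Rinv_le_contravar; [pose proof (pos_INR N0); lra|].
  apply Rplus_le_compat_r. apply le_INR. lia.
Qed.

Lemma sum_flow_zero N m chi x : rsum N (fun i => flow_rhs N m chi x i) = 0.
Proof.
  rewrite (rsum_ext N _ (fun i => (fun _ => 1) i * flow_rhs N m chi x i)) by (intros; ring).
  rewrite flow_identity. unfold Dgap, Dpair, rsum_neq.
  rewrite (rsum_ext (N - 1) _ (fun _ => 0)) by (intros; ring).
  rewrite (rsum_ext N _ (fun _ => 0)).
  2:{ intros i Hi. transitivity (rsum N (fun _ => 0)); [|apply rsum_const0]. apply rsum_ext. intros j Hj. cbv beta. destruct (Nat.eqb i j); ring. }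
  rewrite !rsum_const0. ring.
Qed.

Lemma lip_cont_loc (f : R -> R) s C : 0 <= C ->
  locally s (fun u => Rabs (f u - f s) <= C * Rabs (u - s)) -> continuous f s.
Proof.
  intros HC [d Hd]. apply continuity_pt_filterlim.
  intros eps He. exists (Rmin d (eps / (C + 1))). split.
  { apply Rmin_pos; [apply cond_pos|]. apply Rdiv_lt_0_compat; lra. }
  intros u [_ Hu]. simpl in *. unfold Rdist in *.
  assert (Hb : ball s d u).
  { change (Rabs (u - s) < d). pose proof (Rmin_l d (eps / (C + 1))). lra. }
  specialize (Hd u Hb). pose proof (Rmin_r d (eps / (C + 1))).
  pose proof (Rabs_pos (u - s)).
  assert (Hu2 : Rabs (u - s) < eps / (C + 1)) by lra.
  apply Rmult_lt_compat_l with (r := C + 1) in Hu2; [|lra].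
  replace ((C + 1) * (eps / (C + 1))) with eps in Hu2 by (field; lra).
  assert (C * Rabs (u - s) <= (C + 1) * Rabs (u - s)) by (rewrite Rmult_plus_distr_r, Rmult_1_l; lra). lra.
Qed.

Lemma ball_sep N p r d z : sep N (d + 2 * r) p -> inBall N p r z -> sep N d z.
Proof.
  intros Hp Hz i Hi. specialize (Hp i Hi).
  pose proof (Hz i ltac:(lia)) as A. pose proof (Hz (i + 1)%nat Hi) as B.
  apply Rabs_le_between in A. apply Rabs_le_between in B. lra.
Qed.

Lemma sep_mono N d d' x : d' <= d -> sep N d x -> sep N d' x.
Proof. intros H Hs i Hi. specialize (Hs i Hi). lra. Qed.

Lemma sep_ordered N d x : 0 < d -> sep N d x -> ordered N x.
Proof. intros Hd Hs i Hi. specialize (Hs i Hi). lra. Qed.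

Lemma Kf_pos N m chi d : 0 <= Kf N m chi d.
Proof.
  unfold Kf. apply Rmult_le_pos; [|apply Rlt_le, rp_pos].
  pose proof (Rabs_pos chi). pose proof (pos_INR N).
  assert (0 <= Rabs chi * INR N) by (apply Rmult_le_pos; auto). lra.
Qed.

Lemma Lf_pos N m chi d : 0 <= m -> 0 <= Lf N m chi d.
Proof.
  intros Hm. unfold Lf. pose proof (Rabs_pos chi). pose proof (pos_INR N).
  assert (0 <= Rabs chi * INR N) by (apply Rmult_le_pos; auto).
  pose proof (rp_pos d (- m - 1)).
  apply Rmult_le_pos; [|lra]. apply Rmult_le_pos; [lra|]. apply Rmult_le_pos; lra.
Qed.

Lemma extension N m chi X0 T0 (X : R -> nat -> R) delta t1 :
  1 < m -> 0 < T0 -> is_solution N m chi X0 (Finite T0) X -> 0 < delta -> 0 <= t1 < T0 ->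
  (forall t, t1 <= t < T0 -> sep N delta (X t)) ->
  exists (T' : Rbar) (Y : R -> nat -> R),
    Rbar_lt (Finite T0) T' /\ is_solution N m chi X0 T' Y /\
    (forall t i, 0 <= t -> Rbar_lt t (Finite T0) -> (i < N)%nat -> Y t i = X t i).
Proof.
  intros Hm HT0 (HT & H0 & HR & Hlim & Hder) Hdel Ht1 Hsep.
  simpl in HR, Hder.
  set (d := delta / 2). set (r := delta / 4).
  set (K := Kf N m chi d). set (L := Lf N m chi d).
  set (Fv := flow_rhs N m chi).
  assert (Hd : 0 < d) by (unfold d; lra). assert (Hr : 0 < r) by (unfold r; lra).
  assert (HK0 : 0 <= K) by apply Kf_pos. assert (HL0 : 0 <= L) by (apply Lf_pos; lra).
  set (h := Rmin (r / (K + 1)) (/ (2 * (L + 1)))).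
  assert (Hh : 0 < h).
  { unfold h. apply Rmin_pos; [apply Rdiv_lt_0_compat; lra|]. apply Rinv_0_lt_compat; lra. }
  assert (HhK : h * K <= r).
  { assert (h <= r / (K + 1)) by apply Rmin_l.
    apply Rmult_le_compat_r with (r := K + 1) in H; [|lra].
    replace (r / (K + 1) * (K + 1)) with r in H by (field; lra). nra. }
  assert (HhL : h * L <= 1 / 2).
  { assert (h <= / (2 * (L + 1))) by apply Rmin_r.
    apply Rmult_le_compat_r with (r := L + 1) in H; [|lra].
    replace (/ (2 * (L + 1)) * (L + 1)) with (1 / 2) in H by (field; lra). nra. }
  set (t2 := Rmax ((t1 + T0) / 2) (T0 - h / 2)).
  assert (Ht2 : t1 < t2 < T0 /\ T0 < t2 + h).
  { unfold t2, Rmax. destruct (Rle_dec ((t1 + T0) / 2) (T0 - h / 2)); lra. }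
  set (p := X t2).
  assert (HsepX : forall u, t1 <= u < T0 -> sep N d (X u)).
  { intros u Hu. apply (sep_mono N delta); [unfold d; lra|]. apply Hsep; auto. }
  assert (Hflow : forall u i, t1 < u < T0 -> (i < N)%nat -> is_derive (fun s => X s i) u (Fv (X u) i)).
  { intros u i Hu Hi. apply Hder; auto; lra. }
  assert (HXlip : forall u v k, t1 < u < T0 -> t1 < v < T0 -> (k < N)%nat ->
     Rabs (X u k - X v k) <= K * Rabs (u - v)).
  { intros u v k Hu Hv Hk.
    destruct (MVT_gen (fun w => X w k) v u (fun w => Fv (X w) k)) as [c [Hc Heq]].
    - intros w Hw. apply Hflow; auto.
      unfold Rmin, Rmax in Hw. destruct (Rle_dec v u); lra.
    - intros w Hw. eapply der_cont. apply Hflow; auto.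
      unfold Rmin, Rmax in Hw. destruct (Rle_dec v u); lra.
    - rewrite Heq, Rabs_mult. apply Rmult_le_compat_r; [apply Rabs_pos|].
      apply flow_bound; auto; try lra. apply HsepX.
      unfold Rmin, Rmax in Hc. destruct (Rle_dec v u); lra. }
  assert (Hcont : forall x i, t1 < x < T0 -> (i < N)%nat -> continuous (fun u => Fv (X u) i) x).
  { intros x i Hx Hi. apply (lip_cont_loc _ _ (L * K)); [apply Rmult_le_pos; auto|].
    generalize (loc_int t1 T0 x Hx). apply filter_imp. intros u Hu.
    rewrite Rmult_assoc. apply flow_lip; [lra | lra | apply HsepX; lra | apply HsepX; lra | | auto].
    intros k Hk. apply HXlip; auto. }
  assert (HP : PicHyp N Fv p r K L h).
  { assert (Hpsep : sep N (d + 2 * r) p).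
    { replace (d + 2 * r) with delta by (unfold d, r; field). apply Hsep. lra. }
    split; [auto|]. split; [auto|]. split; [auto|]. split; [auto|]. split; [auto|]. split; [auto|].
    split.
    - intros z Hz i Hi. apply flow_bound; auto; try lra. apply (ball_sep N p r); auto.
    - intros z w e Hz Hw He i Hi. apply flow_lip; auto; try lra.
      + apply (ball_sep N p r); auto.
      + apply (ball_sep N p r); auto. }
  set (Z := Zlim N Fv p t2 h).
  assert (HXball : forall s, t2 <= s < T0 -> inBall N p r (X s)).
  { intros s Hs k Hk. unfold p. destruct (Req_dec s t2) as [->|Hne].
    - replace (X t2 k - X t2 k) with 0 by ring. rewrite Rabs_R0. lra.
    - eapply Rle_trans; [apply HXlip; auto; lra|].
      rewrite Rabs_pos_eq by lra. nra. }
  assert (Hagree : forall s i, t2 <= s < T0 -> (i < N)%nat -> X s i = Z s i).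
  { intros s i Hs Hi. apply (Z_unique N Fv p r K L t2 h HP X s); auto; try lra.
    intros s' Hs'. split; [apply HXball; lra|].
    intros j Hj.
    pose proof (is_RInt_derive (V:=R_CompleteNormedModule) (fun u => X u j) (fun u => Fv (X u) j) t2 s') as HI.
    rewrite Rmin_left, Rmax_right in HI by lra.
    apply HI.
    - intros x Hx. apply Hflow; auto; lra.
    - intros x Hx. apply Hcont; auto; lra. }
  assert (HZinv := Z_inv N Fv p r K L t2 h HP).
  assert (HZsep : forall t, sep N d (Z t)).
  { intros t. apply (ball_sep N p r).
    - replace (d + 2 * r) with delta by (unfold d, r; field). apply Hsep. lra.
    - apply (proj1 HZinv). }
  assert (HZder : forall t i, t2 < t < t2 + h -> (i < N)%nat -> is_derive (fun s => Z s i) t (Fv (Z t) i)).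
  { intros t i Ht Hi. apply (Z_deriv N Fv p r K L t2 h HP); auto. }
  assert (HZsum : forall t, t2 < t < t2 + h -> rsum N (Z t) = 0).
  { intros t Ht. set (u0 := (t2 + T0) / 2).
    assert (Hu0 : t2 < u0 < T0) by (unfold u0; lra).
    assert (HS0 : rsum N (Z u0) = 0).
    { rewrite <- (proj2 (HR u0 ltac:(lra) ltac:(lra))). apply rsum_ext. intros i Hi.
      symmetry. apply Hagree; auto; lra. }
    assert (HdS : forall w, t2 < w < t2 + h -> is_derive (fun s => rsum N (fun i => Z s i)) w 0).
    { intros w Hw. rewrite <- (sum_flow_zero N m chi (Z w)).
      apply (rsum_derive N (fun i s => Z s i)). intros i Hi. apply HZder; auto. }
    destruct (MVT_gen (fun s => rsum N (fun i => Z s i)) u0 t (fun _ => 0)) as [c [Hc Heq]].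
    - intros w Hw. apply HdS. unfold Rmin, Rmax in Hw. destruct (Rle_dec u0 t); lra.
    - intros w Hw. eapply der_cont. apply HdS. unfold Rmin, Rmax in Hw. destruct (Rle_dec u0 t); lra.
    - simpl in Heq. rewrite Rmult_0_l in Heq.
      change (rsum N (fun i => Z t i) = 0). change (rsum N (fun i => Z u0 i) = 0) in HS0. lra. }
  set (Y := fun t => if Rlt_dec t T0 then X t else Z t).
  exists (Finite (t2 + h)), Y. split; [simpl; lra|]. split.
  2:{ intros t i Ht HtT Hi. simpl in HtT. unfold Y. destruct (Rlt_dec t T0); [reflexivity|lra]. }
  split; [simpl; lra|]. split.
  { intros i Hi. unfold Y. destruct (Rlt_dec 0 T0); [apply H0; auto|lra]. }
  split.
  { intros t Ht HtT. simpl in HtT. unfold Y. destruct (Rlt_dec t T0) as [Hlt|Hge].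
    - apply HR; auto.
    - split.
      + apply (sep_ordered N d); auto.
      + apply HZsum. lra. }
  split.
  { intros i Hi. apply (filterlim_ext_loc (fun s => X s i)); [|apply Hlim; auto].
    exists (mkposreal T0 HT0). intros y Hy Hy0. change (Rabs (y - 0) < T0) in Hy.
    rewrite Rminus_0_r, Rabs_pos_eq in Hy by lra.
    unfold Y. destruct (Rlt_dec y T0); [reflexivity|lra]. }
  intros t i Ht HtT Hi. simpl in HtT.
  destruct (Rlt_dec t T0) as [Hlt|Hge].
  - assert (HYt : Y t = X t) by (unfold Y; destruct (Rlt_dec t T0); [reflexivity|lra]).
    rewrite HYt. apply (is_derive_ext_loc (fun s => X s i)).
    + generalize (loc_int (t - 1) T0 t ltac:(lra)). apply filter_imp. intros s Hs.
      unfold Y. destruct (Rlt_dec s T0); [reflexivity|lra].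
    + apply Hder; auto.
  - assert (HYt : Y t = Z t) by (unfold Y; destruct (Rlt_dec t T0); [lra|reflexivity]).
    rewrite HYt. apply (is_derive_ext_loc (fun s => Z s i)).
    + generalize (loc_int t2 (t2 + h) t ltac:(lra)). apply filter_imp. intros s Hs.
      unfold Y. destruct (Rlt_dec s T0); [|reflexivity]. symmetry. apply Hagree; auto; lra.
    + apply HZder; auto; lra.
Qed.

Lemma index_sep N T0 (X : R -> nat -> R) i0 : 0 < T0 -> (i0 + 1 < N)%nat ->
  (forall t, 0 <= t < T0 -> inRN N (X t)) ->
  ~ blows_up_finite_time N (Finite T0) X ->
  exists delta t1, 0 < delta /\ 0 <= t1 < T0 /\
    forall t, t1 <= t < T0 -> delta <= X t (i0 + 1)%nat - X t i0.
Proof.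
  intros HT0 Hi0 HR Hnb. apply NNPP. intros Hn.
  assert (Hex : forall n : nat, exists t, Rmax 0 (T0 - / (INR n + 1)) <= t < T0 /\
      X t (i0 + 1)%nat - X t i0 < / (INR n + 1)).
  { intros n. apply NNPP. intros Hc. apply Hn.
    assert (Hpos : 0 < / (INR n + 1)) by (apply Rinv_0_lt_compat; pose proof (pos_INR n); lra).
    exists (/ (INR n + 1)), (Rmax 0 (T0 - / (INR n + 1))). split; [auto|]. split.
    { split; [apply Rmax_l|]. unfold Rmax. destruct (Rle_dec 0 (T0 - / (INR n + 1))); lra. }
    intros t Ht. apply Rnot_lt_le. intros Hlt. apply Hc. exists t. auto. }
  apply Hnb. exists T0. split; [reflexivity|].
  set (tn := fun n => proj1_sig (constructive_indefinite_description _ (Hex n))).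
  assert (Htn : forall n, Rmax 0 (T0 - / (INR n + 1)) <= tn n < T0 /\
      X (tn n) (i0 + 1)%nat - X (tn n) i0 < / (INR n + 1)).
  { intros n. unfold tn. destruct (constructive_indefinite_description _ (Hex n)) as [t Ht]. exact Ht. }
  exists i0, tn. split; [auto|]. split.
  { intros n. destruct (Htn n) as [[H1 H2] _]. pose proof (Rmax_l 0 (T0 - / (INR n + 1))). lra. }
  split.
  - apply lim_inv. intros n. destruct (Htn n) as [[H1 H2] _].
    pose proof (Rmax_r 0 (T0 - / (INR n + 1))).
    rewrite Rabs_left by lra. lra.
  - apply lim_inv. intros n. destruct (Htn n) as [[H1 H2] H3].
    pose proof (Rmax_l 0 (T0 - / (INR n + 1))).
    destruct (HR (tn n) ltac:(lra)) as [Ho _]. specialize (Ho i0 Hi0).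
    rewrite Rminus_0_r, Rabs_pos_eq by lra. lra.
Qed.

Lemma all_sep N T0 (X : R -> nat -> R) : 0 < T0 ->
  (forall t, 0 <= t < T0 -> inRN N (X t)) ->
  ~ blows_up_finite_time N (Finite T0) X ->
  forall k, (k <= N - 1)%nat -> exists delta t1, 0 < delta /\ 0 <= t1 < T0 /\
    forall t, t1 <= t < T0 -> forall i, (i < k)%nat -> delta <= X t (i + 1)%nat - X t i.
Proof.
  intros HT0 HR Hnb. induction k as [|k IH]; intros Hk.
  - exists 1, 0. split; [lra|]. split; [lra|]. intros; lia.
  - destruct (IH ltac:(lia)) as (d1 & s1 & Hd1 & Hs1 & H1).
    destruct (index_sep N T0 X k HT0 ltac:(lia) HR Hnb) as (d2 & s2 & Hd2 & Hs2 & H2).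
    exists (Rmin d1 d2), (Rmax s1 s2). split; [apply Rmin_pos; auto|]. split.
    { unfold Rmax. destruct (Rle_dec s1 s2); lra. }
    intros t Ht i Hi. pose proof (Rmax_l s1 s2). pose proof (Rmax_r s1 s2).
    pose proof (Rmin_l d1 d2). pose proof (Rmin_r d1 d2).
    destruct (Nat.eq_dec i k) as [->|Hne].
    + specialize (H2 t ltac:(lra)). lra.
    + specialize (H1 t ltac:(lra) i ltac:(lia)). lra.
Qed.

Theorem proposition4p4 (m chi : R) (N : nat) (CN : R) (X0 : nat -> R)
  (T : Rbar) (X : R -> nat -> R) :
  1 < m -> (2 <= N)%nat -> is_CN N m CN -> chi > CN ->
  inRN N X0 -> FNm N m chi X0 < 0 ->
  is_maximal_solution N m chi X0 T X ->
  blows_up_finite_time N T X.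
Proof.
  intros Hm HN HCN Hchi HX0 HF [Hsol Hnot].
  destruct (finite_time N m chi X0 T X Hm HX0 HF Hsol) as [T0 ->].
  apply NNPP. intros Hnb.
  assert (HT0 : 0 < T0) by (destruct Hsol as [H _]; exact H).
  assert (HR : forall t, 0 <= t < T0 -> inRN N (X t)).
  { intros t Ht. destruct Hsol as (_ & _ & HR & _). apply HR; simpl; lra. }
  destruct (all_sep N T0 X HT0 HR Hnb (N - 1) (le_n _)) as (delta & t1 & Hd & Ht1 & Hs).
  apply Hnot. apply (extension N m chi X0 T0 X delta t1); auto.
  intros t Ht i Hi. apply Hs; auto. lia.
Qed.
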